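(* Let $G$ be a finite group, let $g\in G$, and let $\phi=\sum_{\chi\in\mathrm{Irr}(G)}a_\chi\chi$ be a non-negative virtual character of $G$. Then $$c(g)\;\le\;\mathrm{Prob}\big([a,b]^{-1}g\in\ker(\phi)\big)\;=\;\mathrm{Prob}\big(\xi_{g,\phi}=\phi(1)\big),$$ and if moreover $\phi$ is exact, then $c(g)=\mathrm{Prob}\big(\xi_{g,\phi}=\phi(1)\big)$.
   Context: $G$ is a finite group of order $m$; $\mathrm{Irr}(G)$ is the set of irreducible complex characters of $G$. $G\times G$ is a probability space with the uniform measure (mass $1/m^2$ at each point), and $\mathrm{Prob}$ refers to this measure, with $(a,b)$ the random pair. For $g\in G$, $c(g)=|\{(x,y)\in G\times G:[x,y]=g\}|/|G\times G|$. A virtual character $\phi=\sum_{\chi\in\mathrm{Irr}(G)}a_\chi\chi$ with $a_\chi\in\mathbb{C}$ is called non-negative if (a) $\mathrm{Re}(\phi(h))\ge 0$ for all $h\in G$, and (b) all coefficients $a_\chi$ are non-negative real numbers and at least one is non-zero. Its kernel is $\ker(\phi)=\{h\in G:\phi(h)=\phi(1)\}$, and a non-negative virtual character is called exact if $\ker(\phi)=\{1\}$. For $g\in G$, the real random variable $\xi_{g,\phi}$ on $G\times G$ is $\xi_{g,\phi}(a,b)=\mathrm{Re}\big(\phi([a,b]^{-1}g)\big)$. *)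

(* Defs.v *)
From HB Require Import structures.
From mathcomp Require Import all_boot all_order all_algebra all_fingroup all_solvable all_field all_character.
Set Implicit Arguments. Unset Strict Implicit. Unset Printing Implicit Defensive.
Import Order.TTheory GRing.Theory Num.Theory.
Local Open Scope ring_scope.
Local Open Scope group_scope.

Section Defs.
Variables (gT : finGroupType) (G : {group gT}).

Definition vchar (a : Iirr G -> algC) : 'CF(G) := (\sum_i a i *: 'chi[G]_i)%R.

Definition nonneg_coefs (a : Iirr G -> algC) : Prop :=
  [/\ forall h, h \in G -> (0 <= 'Re (vchar a h))%R,
      forall i, (0 <= a i)%R
    & exists i, a i != 0%R].

Definition vker (phi : 'CF(G)) : {set gT} := [set h in G | phi h == phi 1].

Definition exact (phi : 'CF(G)) : Prop := vker phi = [set 1].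

Definition probGG (E : gT -> gT -> bool) : algC :=
  (#|[set p : gT * gT | [&& p.1 \in G, p.2 \in G & E p.1 p.2]]|%:R
     / (#|G| ^ 2)%:R)%R.

Definition cprob (g : gT) : algC := probGG (fun x y => [~ x, y] == g).

Definition xi (phi : 'CF(G)) (g x y : gT) : algC := 'Re (phi ([~ x, y]^-1 * g)).

End Defs.

(* Main.v *)
Require Import Defs.
From HB Require Import structures.
From mathcomp Require Import all_boot all_order all_algebra all_fingroup all_solvable all_field all_character.
Import Order.TTheory GRing.Theory Num.Theory.
Local Open Scope ring_scope.

Lemma Re_eq_norm (z r : algC) : 'Re z = r -> `|z| <= r -> z = r.
Proof.
move=> Hre Hn.
have r0 : 0 <= r by apply: le_trans Hn.
have : `|z| ^+ 2 <= r ^+ 2 by rewrite lerXn2r // nnegrE.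
rewrite normC2_Re_Im Hre -lerBrDl subrr => Him.
have rI : 'Im z \is Num.real by apply: Creal_Im.
have : 'Im z ^+ 2 == 0.
  by rewrite eq_le Him /= -real_normK // exprn_ge0.
rewrite sqrf_eq0 => /eqP /Creal_ImP /Creal_ReP.
by rewrite Hre => <-.
Qed.

Lemma probGG_eq (gT : finGroupType) (G : {group gT}) (E E' : gT -> gT -> bool) :
  (forall x y, x \in G -> y \in G -> E x y = E' x y) -> probGG G E = probGG G E'.
Proof.
move=> H; rewrite /probGG; congr (_%:R / _); apply: eq_card => -[x y].
rewrite !inE /=; case xG: (x \in G); case yG: (y \in G) => //=.
by rewrite H.
Qed.

Lemma probGG_le (gT : finGroupType) (G : {group gT}) (E E' : gT -> gT -> bool) :
  (forall x y, x \in G -> y \in G -> E x y -> E' x y) -> probGG G E <= probGG G E'.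
Proof.
move=> H; rewrite /probGG ler_wpM2r ?invr_ge0 ?ler0n // ler_nat.
apply/subset_leq_card/subsetP => -[x y]; rewrite !inE /= => /and3P[xG yG e].
by rewrite xG yG H.
Qed.

Theorem lemma1 (gT : finGroupType) (G : {group gT}) (g : gT) (a : Iirr G -> algC) :
  g \in G -> nonneg_coefs a ->
  let phi := vchar a in
  [/\ cprob G g <= probGG G (fun x y => (([~ x, y]^-1 * g)%g \in vker phi)),
      probGG G (fun x y => (([~ x, y]^-1 * g)%g \in vker phi))
        = probGG G (fun x y => xi phi g x y == phi 1%g)
    & exact phi -> cprob G g = probGG G (fun x y => xi phi g x y == phi 1%g)].
Proof.
move=> gG [_ a0 _] phi.
have phi1E : phi 1%g = \sum_i a i * 'chi_i 1%g.
  by rewrite /phi /vchar sum_cfunE; apply: eq_bigr => i _; rewrite cfunE.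
have phi1_ge0 : 0 <= phi 1%g.
  rewrite phi1E; apply: sumr_ge0 => i _; apply: mulr_ge0 => //.
  exact: ltW (irr1_gt0 i).
have normle : forall h, `|phi h| <= phi 1%g.
  move=> h; rewrite /phi /vchar sum_cfunE phi1E.
  apply: le_trans (ler_norm_sum _ _ _) _; apply: ler_sum => i _.
  rewrite cfunE normrM ger0_norm //; apply: ler_wpM2l => //.
  exact/char1_ge_norm/irr_char.
have key : forall h, h \in G -> (h \in vker phi) = ('Re (phi h) == phi 1%g).
  move=> h hG; rewrite inE hG /=; apply/eqP/eqP => [->|E].
    by apply/Creal_ReP; apply: ger0_real.
  exact: Re_eq_norm.
have p2 : probGG G (fun x y => (([~ x, y]^-1 * g)%g \in vker phi))
        = probGG G (fun x y => xi phi g x y == phi 1%g).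
  apply: probGG_eq => x y xG yG; rewrite /xi key //.
  by rewrite groupM ?groupV ?groupR.
split => //.
  apply: probGG_le => x y xG yG /eqP <-.
  by rewrite mulVg inE group1 eqxx.
move=> ex; rewrite -p2; apply: probGG_eq => x y xG yG.
by rewrite ex inE -eq_mulVg1.
Qed.
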